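(* Let $G$ be a primitive permutation group on a finite set $\Omega$ of size $n>2$. Then (a) $G$ synchronizes every map $f:\Omega\to\Omega$ of rank $2$; (b) $G$ synchronizes every non-uniform map $f:\Omega\to\Omega$ of rank $3$ or $4$.
   Context: The rank of $f$ is $|\Omega f|$. $G$ synchronizes a non-invertible map $f$ if the semigroup $\langle G,f\rangle$ generated by $G$ and $f$ contains a constant map. The kernel of $f$ is the partition of $\Omega$ into the inverse images of points of the image of $f$; $f$ is uniform if all parts of its kernel have the same size, and non-uniform otherwise. *)

(* Defs.v *)
From mathcomp Require Import all_boot all_fingroup all_solvable.
Set Implicit Arguments. Unset Strict Implicit. Unset Printing Implicit Defensive.

Section Synch.
Variable T : finType.

Inductive in_semigroup (G : {set {perm T}}) (f : T -> T) : (T -> T) -> Prop :=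
  | sg_perm (g : {perm T}) : g \in G -> in_semigroup G f (fun x => g x)
  | sg_map : in_semigroup G f f
  | sg_comp h1 h2 : in_semigroup G f h1 -> in_semigroup G f h2 ->
                    in_semigroup G f (h1 \o h2).

Definition synchronizes (G : {set {perm T}}) (f : T -> T) : Prop :=
  exists h, in_semigroup G f h /\ exists c : T, forall x, h x = c.

Definition map_rank (f : T -> T) : nat := #|[set f x | x in T]|.

Definition uniform (f : T -> T) : Prop :=
  forall y1 y2, y1 \in [set f x | x in T] -> y2 \in [set f x | x in T] ->
    #|f @^-1: [set y1]| = #|f @^-1: [set y2]|.

End Synch.

(* Main.v *)
Require Import Defs.
From mathcomp Require Import all_boot all_fingroup all_solvable.
From Stdlib Require Import Classical ClassicalEpsilon Lia.
From mathcomp Require Import zify.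
Set Implicit Arguments. Unset Strict Implicit. Unset Printing Implicit Defensive.

Definition pb (P : Prop) : bool := if excluded_middle_informative P then true else false.
Lemma pbP (P : Prop) : pb P <-> P.
Proof. rewrite /pb; case: excluded_middle_informative => //. Qed.

Lemma prim_equiv (T : finType) (G : {group {perm T}}) (R : T -> T -> Prop) (x0 : T) :
  [primitive G, on [set: T] | 'P] ->
  (forall x, R x x) -> (forall x y, R x y -> R y x) ->
  (forall x y z, R x y -> R y z -> R x z) ->
  (forall g x y, g \in G -> R x y -> R (g x) (g y)) ->
  (forall x y, R x y -> x = y) \/ (forall x y, R x y).
Proof.
move=> prim Rr Rs Rt Ri.
have trG : [transitive G, on [set: T] | 'P] by case/andP: prim.
have x0T : x0 \in [set: T] by rewrite inE.
move: prim; rewrite (trans_prim_astab x0T trG) => /maximal_eqP [_ maxC].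
have gs : group_set [set g in G | pb (R x0 (g x0))].
  apply/group_setP; split.
    by rewrite inE group1 perm1; apply/pbP.
  move=> g h; rewrite !inE => /andP[Gg /pbP Hg] /andP[Gh /pbP Hh].
  rewrite groupM //; apply/pbP; rewrite permM.
  exact: Rt Hh (Ri _ _ _ Gh Hg).
pose H := Group gs.
have sCH : 'C_G[x0 | 'P]%g \subset H.
  apply/subsetP=> g; rewrite inE => /andP[Gg /astab1P] => /= gx.
  rewrite apermE in gx; by rewrite inE Gg gx; apply/pbP.
have sHG : H \subset G by apply/subsetP=> g; rewrite inE => /andP[].
have getg : forall y, exists2 g, g \in G & y = g x0.
  move=> y; have [g Gg ->] := atransP2 trG x0T (in_setT y); exists g => //.
case: (maxC H sCH sHG) => /= HE; [left | right].
- have cls : forall y, R x0 y -> y = x0.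
    move=> y Ry; have [g Gg Ey] := getg y; subst y.
    have : g \in [set z in G | pb (R x0 (z x0))] by rewrite inE Gg /=; exact/pbP.
    rewrite HE inE => /andP[_ /astab1P] /=. by rewrite apermE.
  move=> x y Rxy; have [g Gg Ex] := getg x; have [h Gh Ey] := getg y; subst x y.
  have Rg : R x0 ((g^-1)%g (h x0)).
    have := Ri _ _ _ (groupVr Gg) Rxy. by rewrite -permM mulgV perm1.
  have := cls _ Rg => /(congr1 g); rewrite -permM mulVg perm1 => <-.
  done.
- have all0 : forall y, R x0 y.
    move=> y; have [g Gg Ey] := getg y; subst y.
    have : g \in [set z in G | pb (R x0 (z x0))] by rewrite HE.
    by rewrite inE => /andP[_ /pbP].
  move=> x y; apply: Rt (all0 y); exact: Rs.
Qed.

Lemma ex_min (T : finType) (P : (T -> T) -> Prop) h0 : P h0 ->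
  exists h, P h /\ forall h', P h' -> map_rank h <= map_rank h'.
Proof.
move=> Ph0.
suff : forall k h, P h -> map_rank h <= k ->
  exists h, P h /\ forall h', P h' -> map_rank h <= map_rank h'.
  by move=> /(_ _ h0 Ph0 (leqnn _)).
elim=> [|k IH] h Ph hk.
  exists h; split => // h' _; rewrite leqn0 in hk; by rewrite (eqP hk).
case: (classic (exists h', P h' /\ map_rank h' <= k)) => [[h' [Ph' hk']]|nex].
  exact: IH Ph' hk'.
exists h; split => // h' Ph'; rewrite leqNgt; apply/negP => lt.
apply: nex; exists h'; split => //; rewrite -ltnS; exact: leq_trans lt hk.
Qed.

Lemma rank_compl (T : finType) (h k : T -> T) : map_rank (h \o k) <= map_rank h.
Proof.
apply: subset_leq_card; apply/subsetP => z /imsetP [x _ ->]; exact: imset_f.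
Qed.

Definition ismin (T : finType) (G : {set {perm T}}) f (e : T -> T) :=
  in_semigroup G f e /\ forall h, in_semigroup G f h -> map_rank e <= map_rank h.

Lemma min_inj (T : finType) (G : {set {perm T}}) f e k :
  ismin G f e -> in_semigroup G f k -> {in [set e x | x in T] &, injective k}.
Proof.
move=> [Me mn] Mk; apply/imset_injP; rewrite eqn_leq leq_imset_card /=.
apply: leq_trans (mn _ (sg_comp Mk Me)) _; apply: subset_leq_card.
apply/subsetP => z /imsetP [x _ ->] /=; apply: imset_f; exact: imset_f.
Qed.

Lemma Rcontra (T : finType) (G : {group {perm T}}) (e : T -> T) p q :
  [primitive G, on [set: T] | 'P] -> (exists u v, e u != e v) -> p != q ->
  (forall g, g \in G -> e (g p) = e (g q)) -> False.
Proof.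
move=> prim [u [v euv]] npq H.
pose R x y := forall g, g \in G -> e (g x) = e (g y).
have := @prim_equiv T G R p prim.
case.
- by [].
- by move=> x y Rxy g Gg; rewrite Rxy.
- by move=> x y z Rxy Ryz g Gg; rewrite Rxy // Ryz.
- move=> g x y Gg Rxy g' Gg'; rewrite -!permM; apply: Rxy; exact: groupM.
- by move=> /(_ p q H) /eqP; rewrite (negbTE npq).
- move=> all; have := all u v 1%g (group1 G); rewrite !perm1 => euv2; by rewrite euv2 eqxx in euv.
Qed.

Lemma stab_count (T : finType) (G : {group {perm T}}) x y :
  [transitive G, on [set: T] | 'P] ->
  #|[set g in G | g x == y]| * #|T| = #|G|.
Proof.
move=> trG.
have [g0 Gg0 Ey] := atransP2 trG (in_setT x) (in_setT y).
rewrite /= apermE in Ey; subst y.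
have -> : [set g in G | g x == g0 x] = [set c * g0 | c in 'C_G[x | 'P]]%g.
  apply/setP => g; apply/idP/imsetP.
    rewrite inE => /andP[Gg /eqP gx].
    exists (g * g0^-1)%g; last by rewrite mulgKV.
    rewrite inE groupM ?groupV //=; apply/astab1P; rewrite /= apermE permM gx.
    by rewrite -permM mulgV perm1.
  move=> [c] /setIP[Gc /astab1P] cx ->; rewrite /= apermE in cx.
  by rewrite inE groupM //= permM cx.
rewrite card_imset; last exact: mulIg.
by rewrite -(card_orbit_stab 'P G x) (atransP trG x (in_setT x)) cardsT mulnC.
Qed.

Lemma sumnMr (I : Type) (r : seq I) (P : pred I) (F : I -> nat) c :
  (\sum_(i <- r | P i) F i) * c = \sum_(i <- r | P i) (F i * c).
Proof. by elim/big_rec2: _ => // i a b _ <-; rewrite mulnDl. Qed.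

Lemma card_sum (T : finType) (a : pred T) : #|[set x | a x]| = \sum_(x | a x) 1.
Proof. by rewrite sum1dep_card. Qed.

Lemma min_uniform (T : finType) (G : {group {perm T}}) f e s :
  [transitive G, on [set: T] | 'P] -> ismin G f e ->
  s \in [set e x | x in T] -> #|e @^-1: [set s]| * map_rank e = #|T|.
Proof.
move=> trG emin sS.
set S := [set e x | x in T]; set K := e @^-1: [set s].
have step1 : forall g, g \in G -> #|[set x in S | g x \in K]| = 1.
  move=> g Gg.
  have Mk : in_semigroup G f (e \o (fun x => g x)) by exact: sg_comp (proj1 emin) (sg_perm f Gg).
  have inj := min_inj emin Mk.
  have eqS : [set (e \o (fun x => g x)) x | x in S] = S.
    apply/eqP; rewrite eqEcard card_in_imset // leqnn andbT.
    apply/subsetP => z /imsetP [x _ ->]; exact: imset_f.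
  have : s \in [set (e \o (fun x => g x)) x | x in S] by rewrite eqS.
  move=> /imsetP [x0 Sx0 Ex0].
  apply: (@eq_card1 _ x0) => z; rewrite !inE.
  apply/andP/eqP.
    move=> [Sz /eqP ez]; apply: inj => //=; by rewrite ez Ex0.
  by move=> ->; rewrite Sx0 /= Ex0.
have step2 : \sum_(g in G) #|[set x in S | g x \in K]| = #|G|.
  rewrite -sum1_card; apply: eq_bigr => g Gg; exact: step1.
have step3 : forall x, (\sum_(g in G | g x \in K) 1) * #|T| = #|K| * #|G|.
  move=> x.
  rewrite (partition_big (fun g : {perm T} => g x) (fun y => y \in K)); last by move=> g /andP[].
  apply: eq_trans (sumnMr _ _ _ _) _.
  rewrite -sum_nat_const; apply: eq_bigr => y Ky.
  rewrite -(stab_count x y trG) card_sum; congr (_ * _); apply: eq_bigl => g.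
  by apply/andP/andP => [[/andP[-> _] ->] | [-> /eqP gx]] //; rewrite gx Ky eqxx.
have : (\sum_(g in G) #|[set x in S | g x \in K]|) * #|T| = #|S| * (#|K| * #|G|).
  rewrite -sum_nat_const -(eq_bigr _ (fun x _ => step3 x)) -sumnMr; congr (_ * _).
  under eq_bigr => g _ do rewrite card_sum.
  rewrite (exchange_big_dep (fun x => x \in S)); last by move=> g x _ /andP[].
  apply: eq_bigr => x Sx; apply: eq_bigl => g; by rewrite Sx.
rewrite step2 /map_rank -/S.
have G0 : 0 < #|G| by apply/card_gt0P; exists 1%g; exact: group1.
move=> eq; apply/eqP; rewrite -(eqn_pmul2r G0); apply/eqP; nia.
Qed.

Lemma two_vals_ex (T : finType) (e : T -> T) :
  1 < map_rank e -> exists u v, e u != e v.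
Proof.
move=> /card_gt1P [x [y [/imsetP [u _ ->] /imsetP [v _ ->] neq]]].
by exists u, v.
Qed.

Lemma notin_img (T : finType) (A : {set T}) : #|A| < #|T| -> exists c, c \notin A.
Proof.
move=> lt; case: (classic (exists c, c \notin A)) => // nex.
have : [set: T] \subset A.
  apply/subsetP => c _; case: (boolP (c \in A)) => // nA; exfalso; apply: nex; by exists c.
move/subset_leq_card; rewrite cardsT => le; by rewrite ltnNge le in lt.
Qed.

Definition adj (T : finType) (G : {set {perm T}}) f (x y : T) :=
  forall k, in_semigroup G f k -> k x != k y.

Lemma rank2_false (T : finType) (G : {group {perm T}}) f e :
  2 < #|T| -> [primitive G, on [set: T] | 'P] -> ismin G f e ->
  map_rank e = 2 -> False.
Proof.
move=> n2 prim emin r2.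
have [a [b [ab Sab]]] : exists a b, a != b /\ [set e x | x in T] = [set a; b].
  apply/cards2P; by rewrite -/(map_rank e) r2.
have vals : forall x, e x = a \/ e x = b.
  move=> x; have : e x \in [set e x | x in T] by apply: imset_f.
  by rewrite Sab !inE => /orP [/eqP -> | /eqP ->]; [left | right].
have two_vals : forall u v w, e u != e w -> e v != e w -> e u = e v.
  move=> u v w; case: (vals u) => ->; case: (vals v) => ->; case: (vals w) => -> //;
  rewrite ?eqxx //; move=> *; apply/eqP; by rewrite eq_sym.
have adj_img : forall u v, e u != e v -> adj G f (e u) (e v).
  move=> u v neq k Mk; apply/negP => /eqP kk.
  have Su : e u \in [set e x | x in T] by apply: imset_f.
  have Sv : e v \in [set e x | x in T] by apply: imset_f.
  have := min_inj emin Mk Su Sv kk.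
  by move/eqP; rewrite (negbTE neq).
have adj_e : forall x y, adj G f x y -> e x != e y.
  move=> x y H; exact: H (proj1 emin).
have adj_inv : forall g x y, g \in G -> adj G f x y -> adj G f (g x) (g y).
  move=> g x y Gg H k Mk; exact: (H _ (sg_comp Mk (sg_perm f Gg))).
have adj_sym : forall x y, adj G f x y -> adj G f y x.
  move=> x y H k Mk; rewrite eq_sym; exact: H.
have [u [v euv]] : exists u v, e u != e v by apply: two_vals_ex; rewrite r2.
have no_two : forall z x y, adj G f z x -> adj G f z y -> x = y.
  move=> z x y Hx Hy; case: (x =P y) => // /eqP nxy; exfalso.
  apply: (Rcontra prim (ex_intro _ u (ex_intro _ v euv)) nxy) => g Gg.
  apply: (two_vals _ _ (g z)); rewrite eq_sym; apply: adj_e; exact: adj_inv.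
have [c nc] : exists c, c \notin [set e x | x in T].
  apply: notin_img; by rewrite -/(map_rank e) r2.
have cu : c != e u by apply: contraNneq nc => ->; apply: imset_f.
have cv : c != e v by apply: contraNneq nc => ->; apply: imset_f.
pose Q x y := x = y \/ adj G f x y.
have := @prim_equiv T G Q a prim.
case.
- by move=> x; left.
- by move=> x y [->|H]; [left | right; apply: adj_sym].
- move=> x y z [->|Hxy] // [<-|Hyz]; [by right | ].
  left; apply: (no_two y); [exact: adj_sym | exact: Hyz].
- by move=> g x y Gg [->|H]; [left | right; apply: adj_inv].
- move=> /(_ (e u) (e v) (or_intror (adj_img _ _ euv))) /eqP; by rewrite (negbTE euv).
- move=> /(_ (e u) c) [/eqP| H]; first by rewrite eq_sym (negbTE cu).
  have := no_two _ _ _ H (adj_img _ _ euv) => /eqP; by rewrite (negbTE cv).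
Qed.

Lemma fib (T : finType) (f : T -> T) (P : pred T) :
  #|[set x | P (f x)]| = \sum_(y in [set f x | x in T] | P y) #|f @^-1: [set y]|.
Proof.
rewrite card_sum (partition_big f (fun y => (y \in [set f x | x in T]) && P y)); last first.
  by move=> x Px; rewrite Px andbT; apply: imset_f.
apply: eq_bigr => y /andP [_ Py]; rewrite card_sum; apply: eq_bigl => x.
rewrite !inE; case: eqP => [->|_]; by rewrite ?Py ?andbF ?andbT.
Qed.

Lemma collide (T : finType) (A : {set T}) (k : T -> T) :
  (forall x, x \in A -> exists y, [/\ y \in A, y != x & k y = k x]) ->
  2 * #|k @: A| <= #|A|.
Proof.
move=> H.
have -> : #|A| = \sum_(v in k @: A) #|[set x in A | k x == v]|.
  rewrite -sum1_card (partition_big k (fun v => v \in k @: A)); last first.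
    by move=> x Ax; apply: imset_f.
  apply: eq_bigr => v _; by rewrite card_sum.
rewrite mulnC -sum_nat_const; apply: leq_sum => v /imsetP [x Ax ->].
have [y [Ay yx kyx]] := H x Ax.
have : [set x; y] \subset [set z in A | k z == k x].
  apply/subsetP => z; rewrite !inE => /orP [/eqP -> | /eqP ->]; by rewrite ?Ax ?Ay ?kyx eqxx.
move/subset_leq_card; by rewrite cards2 eq_sym yx.
Qed.

Lemma p34 (T : finType) (G : {group {perm T}}) f e :
  [primitive G, on [set: T] | 'P] -> ismin G f e ->
  map_rank e = 3 -> map_rank f = 4 -> False.
Proof.
move=> prim emin r3 r4.
have trG : [transitive G, on [set: T] | 'P] by case/andP: prim.
set Y := [set f x | x in T].
set N := #|T|.
pose w y := #|f @^-1: [set y]|.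
have Me := proj1 emin.
have hA : forall g y, g \in G -> y \in Y ->
    3 * \sum_(y' in Y | e (g y') == e (g y)) w y' = N.
  move=> g y Gg Yy.
  have Mh : in_semigroup G f (e \o (fun x => g x) \o f).
    exact: sg_comp (sg_comp Me (sg_perm f Gg)) (sg_map _ _).
  have rh : map_rank (e \o (fun x => g x) \o f) = 3.
    apply/eqP; rewrite eqn_leq; apply/andP; split; rewrite -r3.
      exact: leq_trans (rank_compl (e \o (fun x => g x)) f) (rank_compl e _).
    exact: (proj2 emin _ Mh).
  have hmin : ismin G f (e \o (fun x => g x) \o f).
    split => // h' Mh'; rewrite rh -r3; exact: (proj2 emin).
  have [x0 _ ->] := imsetP Yy.
  have sS : e (g (f x0)) \in [set (e \o (fun x => g x) \o f) x | x in T].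
    by apply/imsetP; exists x0.
  have := min_uniform trG hmin sS; rewrite rh => H.
  rewrite -[RHS]H mulnC; congr (_ * _).
  rewrite -(fib f (fun y' => e (g y') == e (g (f x0)))); apply: eq_card => x.
  by rewrite !inE.
have G1 : (1%g : {perm T}) \in G by apply: group1.
have hC : forall y, y \in Y -> 0 < w y.
  move=> y /imsetP [x _ ->]; apply/card_gt0P; exists x; by rewrite !inE.
have hB : \sum_(y in Y) w y = N.
  have -> : N = #|[set x : T | true]| by rewrite /N; apply: eq_card => x; rewrite inE.
  rewrite (fib f (fun _ => true)); by apply: eq_bigl => y; rewrite andbT.
set D := [set y in Y | 3 * w y == N].
have D1 : forall y, y \in Y -> 3 * w y <= N.
  move=> y Yy; rewrite -(hA 1%g y G1 Yy) leq_pmul2l //.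
  rewrite (bigD1 y) /=; last by rewrite Yy eqxx.
  exact: leq_addr.
have D2 : forall g y y', g \in G -> y \in D -> y' \in Y -> y' != y ->
    e (g y') = e (g y) -> False.
  move=> g y y' Gg; rewrite inE => /andP [Yy /eqP wy] Yy' ny ey.
  have := hA g y Gg Yy.
  rewrite (bigD1 y) /=; last by rewrite Yy eqxx.
  rewrite (bigD1 y') /=; last by rewrite Yy' ey eqxx ny.
  have := hC y' Yy'; lia.
have D3 : forall g y, g \in G -> y \in Y -> y \notin D ->
    exists y', [/\ y' \in Y, y' != y & e (g y') = e (g y)].
  move=> g y Gg Yy nD; case: (classic (exists y', [/\ y' \in Y, y' != y & e (g y') = e (g y)])) => // nex.
  exfalso; move: nD; rewrite inE Yy /=; apply/negP/negPn/eqP.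
  rewrite -(hA g y Gg Yy) (big_pred1 y) // => i /=.
  case: (i =P y) => [->|/eqP niy]; first by rewrite Yy eqxx.
  apply/negP => /andP [Yi /eqP ei]; apply: nex; by exists i.
have sD : D \subset Y by apply/subsetP => y; rewrite inE => /andP[].
have card4 : #|D| + #|Y :\: D| = 4.
  have Y4 : #|Y| = 4 by exact: r4.
  by rewrite -Y4 -(cardsID D Y) (setIidPr sD).
have sumD : 3 * \sum_(y in D) w y = #|D| * N.
  rewrite mulnC sumnMr -sum_nat_const; apply: eq_bigr => y.
  by rewrite inE => /andP[_ /eqP]; rewrite mulnC.
have sumYD : #|Y :\: D| <= \sum_(y in Y :\: D) w y.
  rewrite -sum1_card; apply: leq_sum => y; rewrite inE => /andP[_ Yy]; exact: hC.
have hB' : \sum_(y in Y) w y = \sum_(y in D) w y + \sum_(y in Y :\: D) w y.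
  by rewrite (big_setID D) /= (setIidPr sD).
have col : 2 * #|e @: (Y :\: D)| <= #|Y :\: D|.
  apply: collide => y; rewrite inE => /andP [nD Yy].
  have [y' [Yy' ny e']] := D3 1%g y G1 Yy nD.
  rewrite !perm1 in e'.
  exists y'; split => //; rewrite inE Yy' andbT; apply/negP => Dy'.
  apply: (D2 1%g y' y G1 Dy' Yy); first by rewrite eq_sym.
  by rewrite !perm1.
have r3' : #|e @: Y| = 3.
  rewrite -imset_comp -/(map_rank (e \o f)); apply/eqP; rewrite eqn_leq; apply/andP; split.
    by rewrite -r3 rank_compl.
  rewrite -r3; exact: (proj2 emin _ (sg_comp Me (sg_map _ _))).
have eY : e @: Y = e @: D :|: e @: (Y :\: D).
  by rewrite -imsetU -{1}(setID Y D) (setIidPr sD).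
have ub : #|e @: Y| <= #|D| + #|e @: (Y :\: D)|.
  rewrite eY cardsU; have := leq_imset_card e D; lia.
have N4 : 4 <= N.
  rewrite -r4; exact: leq_imset_card.
have c2 : #|Y :\: D| == 2.
  rewrite eqn_leq; apply/andP; split; first lia.
  move: hB sumD sumYD hB' card4; clear -N4.
  case: #|D| => [|[|[|[|[|k]]]]] /=; nia.
case/cards2P: c2 => p [q [pq YDe]].
have key : forall g, g \in G -> e (g p) = e (g q).
  move=> g Gg.
  have : p \in Y :\: D by rewrite YDe !inE eqxx.
  rewrite inE => /andP[nDp Yp].
  have [y' [Yy' ny' ey']] := D3 g p Gg Yp nDp.
  have : y' \in Y :\: D.
    rewrite inE Yy' andbT; apply/negP => Dy'.
    apply: (D2 g y' p Gg Dy' Yp); [by rewrite eq_sym | by rewrite ey'].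
  rewrite YDe !inE => /orP [/eqP E | /eqP E]; first by rewrite E eqxx in ny'.
  by rewrite -ey' E.
apply: (Rcontra prim _ pq key); apply: two_vals_ex; by rewrite r3.
Qed.

Lemma main_lemma (T : finType) (G : {group {perm T}}) f :
  2 < #|T| -> [primitive G, on [set: T] | 'P] ->
  synchronizes G f \/ exists e, ismin G f e /\ 3 <= map_rank e.
Proof.
move=> n2 prim.
have [e [Me mn]] := ex_min (sg_map G f).
have emin : ismin G f e by split.
case: (ltnP 2 (map_rank e)) => r; first by right; exists e.
left.
have [x0 _] : exists2 x0 : T, x0 \in T & true.
  have /card_gt0P [x0 _] : 0 < #|T| by lia.
  by exists x0.
have r0 : 0 < map_rank e by apply/card_gt0P; exists (e x0); apply: imset_f.
have : map_rank e = 1 \/ map_rank e = 2 by lia.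
case=> [r1 | r2]; last by exfalso; exact: rank2_false n2 prim emin r2.
have /cards1P [c Ec] : #|[set e x | x in T]| == 1 by apply/eqP.
exists e; split => //; exists c => x.
have : e x \in [set e x | x in T] by apply: imset_f.
by rewrite Ec inE => /eqP.
Qed.

Theorem theorem4 (T : finType) (G : {group {perm T}}) :
  2 < #|T| ->
  [primitive G, on [set: T] | 'P] ->
  (forall f : T -> T, map_rank f = 2 -> synchronizes G f) /\
  (forall f : T -> T, (map_rank f = 3 \/ map_rank f = 4) -> ~ uniform f ->
     synchronizes G f).
Proof.
move=> n2 prim.
have trG : [transitive G, on [set: T] | 'P] by case/andP: prim.
split.
  move=> f rf; case: (main_lemma f n2 prim) => // [[e [emin r3]]].
  have := proj2 emin f (sg_map _ _); lia.
move=> f rf nu; case: (main_lemma f n2 prim) => // [[e [emin r3]]].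
have le := proj2 emin f (sg_map _ _).
case: (eqVneq (map_rank e) (map_rank f)) => [eq | ne].
  exfalso; apply: nu => y1 y2 Y1 Y2.
  have fmin : ismin G f f.
    split; first exact: sg_map.
    move=> h Mh; rewrite -eq; exact: (proj2 emin).
  have H1 := min_uniform trG fmin Y1; have H2 := min_uniform trG fmin Y2.
  have rp : 0 < map_rank f by lia.
  apply/eqP; rewrite -(eqn_pmul2r rp) H1 H2 //.
exfalso; apply: (p34 prim emin); lia.
Qed.
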